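(* Let $n\ge3$ and suppose $T=T_\lambda(r,m)$ acts linearly and inner faithfully on $\Bbbk\overline{Q}$ so that $g$ acts by a reflection: $g\cdot e_i=e_{n-(d+i)}$, $g\cdot a_i=\mu_ia^*_{n-(d+i+1)}$, $g\cdot a_i^*=\mu_i^*a_{n-(d+i+1)}$ for some integer $0<d\le n-1$ and $\mu_i,\mu_i^*\in\Bbbk^\times$. Let $\sigma$ be the quiver-Taft map of the action. (1) If $j$ is a vertex with $g\cdot j=j$, then there exist $c_j,c_j^*\in\Bbbk$ with $$\sigma(a_{j-1})=-c_j^*a_{j-1},\quad \sigma(a_{j-1}^* )=-\mu_j^{-1}\mu^*_{j-1}c_ja_j,\quad \sigma(a_j)=c_ja^*_{j-1},\quad \sigma(a_j^* )=c_j^*a_j^*.$$ (2) If $k$ is a vertex with $g\cdot k=k+1$ and $g\cdot(k+1)=k$, then there exists $c_k\in\Bbbk$ with $\sigma(a_k)=c_ke_k$ and $\sigma(a_k^* )=\lambda\mu_k^*c_ke_{k+1}$; if $c_k\neq0$ then $\lambda^2\mu_k\mu_k^*=1$. (3) If $i$ is neither $j-1$ nor $j$ for any vertex $j$ fixed by $g$, and is not a vertex $k$ as in (2), then $\sigma(a_i)=\sigma(a_i^* )=0$.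
   Context: Let $\Bbbk$ be a field, $r>1$ and $m$ positive integers with $r\mid m$, and $\lambda\in\Bbbk$ a primitive $r$-th root of unity, with $r$ coprime to the characteristic of $\Bbbk$. The generalized Taft algebra $T=T_\lambda(r,m)$ is the Hopf algebra generated by $g,x$ with relations $gx=\lambda xg$, $g^m=1$, $x^r=0$, $\Delta(g)=g\otimes g$, $\Delta(x)=1\otimes x+x\otimes g$, $\varepsilon(g)=1,\varepsilon(x)=0$, $S(g)=g^{-1}$, $S(x)=-xg^{-1}$. An action of $T$ on an algebra $A$ is a $T$-module algebra structure; so $g$ acts by an algebra automorphism and $x\cdot(ab)=a(x\cdot b)+(x\cdot a)(g\cdot b)$. It is inner faithful if no nonzero Hopf ideal $I$ of $T$ satisfies $I\cdot A=0$. Vertex indices are taken modulo $n$. $\overline{Q}$ has vertices $0,\dots,n-1$ and arrows $a_i:i\to i+1$, $a_i^*:i+1\to i$; in $\Bbbk\overline{Q}$, $e_i$ is the trivial path at $i$, $s(a),t(a)$ source and target, and $pq$ is concatenation ($p$ then $q$) if $t(p)=s(q)$, else $0$. A linear action: $g$ acts by a path-length-preserving automorphism ($g\cdot e_i=e_{g\cdot i}$) and $x$ maps vertices into the span of vertices and arrows into the span of vertices and arrows. Then there are scalars $\gamma_i$ with $x\cdot e_i=\gamma_ie_i-\gamma_i\lambda^{-1}e_{g\cdot i}$; the quiver-Taft map $\sigma$ is the linear map on the span of vertices and arrows with $\sigma(e_i)=0$ and $\sigma(a)=x\cdot a-\gamma_{t(a)}a+\gamma_{s(a)}\lambda^{-1}(g\cdot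 a)$ for arrows $a$. (It satisfies $\sigma(a)=e_{s(a)}\sigma(a)e_{g\cdot t(a)}$ and $\sigma(g\cdot a)=\lambda^{-1}g\cdot\sigma(a)$.) *)

(* Defs.v *)
From HB Require Import structures.
From mathcomp Require Import all_boot all_order all_algebra.
From mathcomp Require Import finmap.
From mathcomp.multinomials Require Import monalg.
Set Implicit Arguments. Unset Strict Implicit. Unset Printing Implicit Defensive.
Import Order.TTheory GRing.Theory.
Local Open Scope ring_scope.

(* An arrow is a pair (i, b) : 'I_n * bool;                               *)
(*   (i, false) = a_i   : i -> i+1,                                       *)
(*   (i, true)  = a_i^* : i+1 -> i.                                       *)

Definition qarrow (n : nat) := ('I_n * bool)%type.

Definition asrc n (a : qarrow n) : 'I_n := if a.2 then ordS a.1 else a.1.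
Definition atgt n (a : qarrow n) : 'I_n := if a.2 then a.1 else ordS a.1.

Fixpoint validp n (v : 'I_n) (s : seq (qarrow n)) : bool :=
  match s with
  | [::] => true
  | a :: s' => (asrc a == v) && validp (atgt a) s'
  end.

Fixpoint endp n (v : 'I_n) (s : seq (qarrow n)) : 'I_n :=
  match s with
  | [::] => v
  | a :: s' => endp (atgt a) s'
  end.

(* the type of paths of Qbar (trivial paths e_v are (v, [::])) *)
Definition qpath n := {p : 'I_n * seq (qarrow n) | validp p.1 p.2}.

Definition pstart n (p : qpath n) : 'I_n := (val p).1.
Definition pend n (p : qpath n) : 'I_n := endp (val p).1 (val p).2.
Definition plen n (p : qpath n) : nat := size (val p).2.

(* the path algebra k Qbar, as the free k-module on the paths *)
Notation pathalg K n := {malg K[qpath n]}.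

Definition triv_path n (v : 'I_n) : qpath n :=
  @exist _ (fun p : 'I_n * seq (qarrow n) => validp p.1 p.2) (v, [::]) isT.

Lemma arrow_valid n (a : qarrow n) : validp (asrc a) [:: a].
Proof. by rewrite /= eqxx. Qed.

Definition arrow_path n (a : qarrow n) : qpath n :=
  @exist _ (fun p : 'I_n * seq (qarrow n) => validp p.1 p.2) (asrc a, [:: a])
    (arrow_valid a).

Definition evtx (K : fieldType) n (v : 'I_n) : pathalg K n := << triv_path v >>.
Definition earr (K : fieldType) n (a : qarrow n) : pathalg K n := << arrow_path a >>.

Definition pcat (K : fieldType) n (p q : qpath n) : pathalg K n :=
  if pend p == pstart q then
    match insub ((val p).1, (val p).2 ++ (val q).2) : option (qpath n) with
    | Some w => << w >>
    | None => 0
    end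
  else 0.

Definition pmul (K : fieldType) n (u v : pathalg K n) : pathalg K n :=
  \sum_(p <- msupp u) \sum_(q <- msupp v) (u@_p * v@_q) *: pcat K p q.

Definition pone (K : fieldType) n : pathalg K n := \sum_(v : 'I_n) evtx K v.

Definition span_len_le (K : fieldType) n (l : nat) (u : pathalg K n) : Prop :=
  forall p, p \in msupp u -> (plen p <= l)%N.
Definition span_len_eq (K : fieldType) n (l : nat) (u : pathalg K n) : Prop :=
  forall p, p \in msupp u -> plen p = l.

(* The generalized Taft algebra T = T_lambda(r,m), with basis x^a g^b     *)
(* (a < r, b < m); an element is its coefficient function.                *)

Definition taftB (r m : nat) := ('I_r * 'I_m)%type.
Notation taft K r m := {ffun taftB r m -> K}.
Notation taft2 K r m := {ffun (taftB r m * taftB r m) -> K}.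

(* structure constant: x^a1 g^b1 * x^a2 g^b2 = lam^(b1 a2) x^(a1+a2) g^(b1+b2)
   (which is 0 when a1 + a2 >= r, since x^r = 0, and uses g^m = 1) *)
Definition tconst (K : fieldType) (r m : nat) (lam : K) (p1 p2 p : taftB r m) : K :=
  if ((p1.1 + p2.1)%N == p.1) && (((p1.2 + p2.2) %% m)%N == p.2)
  then lam ^+ (p1.2 * p2.1) else 0.

Definition tmul (K : fieldType) r m (lam : K) (u v : taft K r m) : taft K r m :=
  [ffun p : taftB r m => \sum_(p1 : taftB r m) \sum_(p2 : taftB r m)
                u p1 * v p2 * tconst lam p1 p2 p].

Definition tbas (K : fieldType) r m (a b : nat) : taft K r m :=
  [ffun p : taftB r m => if ((p.1 : nat) == a) && ((p.2 : nat) == b) then 1 else 0].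

Definition tone (K : fieldType) r m : taft K r m := tbas K r m 0 0.
Definition tg (K : fieldType) r m : taft K r m := tbas K r m 0 1.
Definition tx (K : fieldType) r m : taft K r m := tbas K r m 1 0.

Definition t2mul (K : fieldType) r m (lam : K) (u v : taft2 K r m) : taft2 K r m :=
  [ffun pq : taftB r m * taftB r m => \sum_(pq1 : taftB r m * taftB r m) \sum_(pq2 : taftB r m * taftB r m)
      u pq1 * v pq2 * tconst lam pq1.1 pq2.1 pq.1 * tconst lam pq1.2 pq2.2 pq.2].

Definition ttens (K : fieldType) r m (u v : taft K r m) : taft2 K r m :=
  [ffun pq : taftB r m * taftB r m => u pq.1 * v pq.2].

(* comultiplication: the algebra map with Delta(g) = g(x)g, Delta(x) = 1(x)x + x(x)g *)
Definition tDelta (K : fieldType) r m (lam : K) (u : taft K r m) : taft2 K r m :=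
  let Dx := ttens (tone K r m) (tx K r m) + ttens (tx K r m) (tg K r m) in
  let Dg := ttens (tg K r m) (tg K r m) in
  let one2 := ttens (tone K r m) (tone K r m) in
  [ffun pq : taftB r m * taftB r m => \sum_(p : taftB r m)
     u p * t2mul lam (iter p.1 (t2mul lam Dx) one2) (iter p.2 (t2mul lam Dg) one2) pq].

Definition teps (K : fieldType) r m (u : taft K r m) : K :=
  \sum_(p : taftB r m) (if (p.1 : nat) == 0%N then u p else 0).

(* antipode: the anti-algebra map with S(g) = g^-1 = g^(m-1), S(x) = - x g^-1,
   so S(x^a g^b) = S(g)^b S(x)^a *)
Definition tS (K : fieldType) r m (lam : K) (u : taft K r m) : taft K r m :=
  let Sg := tbas K r m 0 (m.-1) in
  let Sx := - tbas K r m 1 (m.-1) in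
  [ffun q : taftB r m => \sum_(p : taftB r m)
     u p * tmul lam (iter p.2 (tmul lam Sg) (tone K r m))
                    (iter p.1 (tmul lam Sx) (tone K r m)) q].

Definition tscale (K : fieldType) r m (c : K) (u : taft K r m) : taft K r m :=
  [ffun p : taftB r m => c * u p].

Definition taft_hopf_ideal (K : fieldType) r m (lam : K) (I : taft K r m -> Prop) : Prop :=
  [/\ I 0,
      (forall u v, I u -> I v -> I (u + v)),
      (forall (c : K) u, I u -> I (tscale c u)),
      (forall t u, I u -> I (tmul lam t u) /\ I (tmul lam u t))
    & [/\ (forall u, I u -> teps u = 0),
      (forall u, I u -> exists (s1 s2 : seq (taft K r m * taft K r m)),
          (forall pq, pq \in s1 -> I pq.1) /\
          (forall pq, pq \in s2 -> I pq.2) /\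
          tDelta lam u = \sum_(pq <- s1) ttens pq.1 pq.2 + \sum_(pq <- s2) ttens pq.1 pq.2)
    & (forall u, I u -> I (tS lam u))]].

(* Actions of T on k Qbar.  A T-module structure is given by the operators *)
(* G (action of g) and X (action of x) subject to the defining relations  *)
(* of T; the element sum c_{a,b} x^a g^b acts by sum c_{a,b} X^a G^b.      *)

Definition taft_act (K : fieldType) n r m (G X : pathalg K n -> pathalg K n)
  (u : taft K r m) (w : pathalg K n) : pathalg K n :=
  \sum_(p : taftB r m) u p *: iter p.1 X (iter p.2 G w).

Definition taft_module_algebra (K : fieldType) n r m (lam : K)
  (G X : pathalg K n -> pathalg K n) : Prop :=
  [/\
      (forall (c : K) u v, G (c *: u + v) = c *: G u + G v),
      (forall (c : K) u v, X (c *: u + v) = c *: X u + X v),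
      (forall u, G (X u) = lam *: X (G u)),
      (forall u, iter m G u = u)
    & [/\ (forall u, iter r X u = 0),
      (forall u v, G (pmul u v) = pmul (G u) (G v)) /\ G (pone K n) = pone K n,
      (forall u v, X (pmul u v) = pmul u (X v) + pmul (X u) (G v))
    & X (pone K n) = 0]].

Definition taft_linear_action (K : fieldType) n (G X : pathalg K n -> pathalg K n) : Prop :=
  [/\ bijective G,
      (forall p : qpath n, span_len_eq (plen p) (G << p >>)),
      (forall v : 'I_n, span_len_le 0 (X (evtx K v)))
    & (forall a : qarrow n, span_len_le 1 (X (earr K a)))].

Definition inner_faithful (K : fieldType) n r m (lam : K)
  (G X : pathalg K n -> pathalg K n) : Prop :=
  forall I : taft K r m -> Prop, taft_hopf_ideal lam I ->
    (forall u w, I u -> taft_act G X u w = 0) -> forall u, I u -> u = 0.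

Definition quiver_taft (K : fieldType) n (lam : K) (gam : 'I_n -> K)
  (G X : pathalg K n -> pathalg K n) (a : qarrow n) : pathalg K n :=
  X (earr K a) - gam (atgt a) *: earr K a + (gam (asrc a) * lam^-1) *: G (earr K a).

Definition refl_vtx (n d : nat) (i : nat) : nat := ((2 * n) - (d + i)) %% n.

(* Main.v *)
Require Import Defs.
From HB Require Import structures.
From mathcomp Require Import all_boot all_order all_algebra.
From mathcomp Require Import finmap.
From mathcomp.multinomials Require Import monalg.
From mathcomp Require Import zify ring.
Set Implicit Arguments. Unset Strict Implicit. Unset Printing Implicit Defensive.
Import GRing.Theory.
Local Open Scope ring_scope.
Definition bas (K : fieldType) n (p : qpath n) : pathalg K n := << p >>.

Lemma basE (K : fieldType) n (p w : qpath n) : (bas K p)@_w = (p == w)%:R.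
Proof. exact: mcoeffU. Qed.

Lemma msupp_bas (K : fieldType) n (p : qpath n) : msupp (bas K p) = [fset p]%fset.
Proof. by rewrite /bas msuppU oner_eq0. Qed.

Lemma evtxE (K : fieldType) n (v : 'I_n) : evtx K v = bas K (triv_path v).
Proof. by []. Qed.

Lemma earrE (K : fieldType) n (a : qarrow n) : earr K a = bas K (arrow_path a).
Proof. by []. Qed.

Lemma mcoeff_sum (K : fieldType) n (I : Type) (r : seq I) (P : pred I) (F : I -> pathalg K n) w :
  (\sum_(i <- r | P i) F i)@_w = \sum_(i <- r | P i) (F i)@_w.
Proof. by apply: (big_morph (mcoeff w)); [move=> x y; rewrite mcoeffD|rewrite mcoeff0]. Qed.

Lemma coef_sum (K : fieldType) n (D : {fset qpath n}) (F : qpath n -> K) w :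
  (\sum_(p <- D) F p *: bas K p)@_w = if w \in D then F w else 0.
Proof.
rewrite mcoeff_sum.
under eq_bigr => i _ do rewrite mcoeffZ basE mulr_natr mulrb.
rewrite -big_mkcond; case: ifP => wD.
  exact: (@fbig_pred1_inj _ _ _ _ _ F id D w wD (@inj_id _)).
rewrite big_seq_cond big1 // => i /andP[iD /eqP e].
by rewrite e wD in iD.
Qed.

Lemma pmulw (K : fieldType) n (u v : pathalg K n) (D1 D2 : {fset qpath n}) :
  (msupp u `<=` D1)%fset -> (msupp v `<=` D2)%fset ->
  pmul u v = \sum_(p <- D1) \sum_(q <- D2) (u@_p * v@_q) *: pcat K p q.
Proof.
move=> le1 le2; rewrite /pmul (big_fset_incl _ le1) /=.
  apply/eq_bigr=> k1 _; apply/big_fset_incl => // k _ /mcoeff_outdom ->.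
  by rewrite mulr0 scale0r.
move=> k _ /mcoeff_outdom g1k.
by rewrite big1 => // k' _; rewrite g1k mul0r scale0r.
Qed.

Lemma pmulDZl (K : fieldType) n (c : K) (u1 u2 v : pathalg K n) :
  pmul (c *: u1 + u2) v = c *: pmul u1 v + pmul u2 v.
Proof.
pose D := (msupp u1 `|` msupp u2 `|` msupp (c *: u1 + u2))%fset.
have h1 : (msupp u1 `<=` D)%fset by apply/fsubsetP => x hx; rewrite !inE hx.
have h2 : (msupp u2 `<=` D)%fset by apply/fsubsetP => x hx; rewrite !inE hx !orbT.
have h3 : (msupp (c *: u1 + u2) `<=` D)%fset by apply/fsubsetP => x hx; rewrite !inE hx !orbT.
rewrite (pmulw h3 (fsubset_refl _)) (pmulw h1 (fsubset_refl _)) (pmulw h2 (fsubset_refl _)).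
rewrite scaler_sumr -big_split /=; apply: eq_bigr => p _.
rewrite scaler_sumr -big_split /=; apply: eq_bigr => q _.
by rewrite mcoeffD mcoeffZ scalerA -scalerDl mulrDl mulrA.
Qed.

Lemma pmulDZr (K : fieldType) n (c : K) (u1 u2 v : pathalg K n) :
  pmul v (c *: u1 + u2) = c *: pmul v u1 + pmul v u2.
Proof.
pose D := (msupp u1 `|` msupp u2 `|` msupp (c *: u1 + u2))%fset.
have h1 : (msupp u1 `<=` D)%fset by apply/fsubsetP => x hx; rewrite !inE hx.
have h2 : (msupp u2 `<=` D)%fset by apply/fsubsetP => x hx; rewrite !inE hx !orbT.
have h3 : (msupp (c *: u1 + u2) `<=` D)%fset by apply/fsubsetP => x hx; rewrite !inE hx !orbT.
rewrite (pmulw (fsubset_refl _) h3) (pmulw (fsubset_refl _) h1) (pmulw (fsubset_refl _) h2).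
rewrite scaler_sumr -big_split /=; apply: eq_bigr => p _.
rewrite scaler_sumr -big_split /=; apply: eq_bigr => q _.
by rewrite mcoeffD mcoeffZ scalerA -scalerDl mulrDr !mulrA [v@_p * c]mulrC.
Qed.

Lemma pmul_r_bas (K : fieldType) n (u : pathalg K n) q :
  pmul u (bas K q) = \sum_(p <- msupp u) u@_p *: pcat K p q.
Proof.
rewrite /pmul; apply: eq_bigr => p _.
by rewrite msupp_bas big_seq_fset1 basE eqxx mulr1.
Qed.

Lemma pmul_l_bas (K : fieldType) n (v : pathalg K n) p :
  pmul (bas K p) v = \sum_(q <- msupp v) v@_q *: pcat K p q.
Proof.
by rewrite /pmul msupp_bas big_seq_fset1 basE eqxx; apply: eq_bigr => q _; rewrite mul1r.
Qed.

Lemma pmul_bas (K : fieldType) n (p q : qpath n) :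
  pmul (bas K p) (bas K q) = pcat K p q.
Proof. by rewrite pmul_r_bas msupp_bas big_seq_fset1 basE eqxx scale1r. Qed.

Lemma pcat_triv_r (K : fieldType) n (p : qpath n) v :
  pcat K p (triv_path v) = if pend p == v then bas K p else 0.
Proof.
rewrite /pcat /=; case: ifP => // _.
have -> : ((val p).1, (val p).2 ++ [::]) = val p by rewrite cats0 -surjective_pairing.
by rewrite valK.
Qed.

Lemma pcat_triv_l (K : fieldType) n (q : qpath n) v :
  pcat K (triv_path v) q = if v == pstart q then bas K q else 0.
Proof.
rewrite /pcat /=; case: eqP => // e; have {}e : v = pstart q := e.
have -> : (v, [::] ++ (val q).2) = val q by rewrite cat0s e /pstart -surjective_pairing.
by rewrite valK.
Qed.

Lemma pend_arrow n (a : qarrow n) : pend (arrow_path a) = atgt a.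
Proof. by []. Qed.
Lemma pstart_arrow n (a : qarrow n) : pstart (arrow_path a) = asrc a.
Proof. by []. Qed.
Lemma pend_triv n (v : 'I_n) : pend (triv_path v) = v.
Proof. by []. Qed.
Lemma pstart_triv n (v : 'I_n) : pstart (triv_path v) = v.
Proof. by []. Qed.
Lemma plen_arrow n (a : qarrow n) : plen (arrow_path a) = 1%N.
Proof. by []. Qed.
Lemma plen_triv n (v : 'I_n) : plen (triv_path v) = 0%N.
Proof. by []. Qed.

Lemma coef_mul_e_r (K : fieldType) n (u : pathalg K n) v w :
  (pmul u (evtx K v))@_w = if pend w == v then u@_w else 0.
Proof.
rewrite evtxE pmul_r_bas.
have H p : u@_p *: pcat K p (triv_path v) = (if pend p == v then u@_p else 0) *: bas K p.
  by rewrite pcat_triv_r; case: ifP; rewrite ?scaler0 ?scale0r.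
under eq_bigr => p _ do rewrite H.
rewrite coef_sum; case: ifP => // /negbT /mcoeff_outdom ->.
by case: ifP.
Qed.

Lemma coef_mul_e_l (K : fieldType) n (u : pathalg K n) v w :
  (pmul (evtx K v) u)@_w = if pstart w == v then u@_w else 0.
Proof.
rewrite evtxE pmul_l_bas.
have H p : u@_p *: pcat K (triv_path v) p = (if pstart p == v then u@_p else 0) *: bas K p.
  by rewrite pcat_triv_l eq_sym; case: ifP; rewrite ?scaler0 ?scale0r.
under eq_bigr => p _ do rewrite H.
rewrite coef_sum; case: ifP => // /negbT /mcoeff_outdom ->.
by case: ifP.
Qed.

Lemma pmul_Ae (K : fieldType) n (a : qarrow n) v :
  pmul (bas K (arrow_path a)) (bas K (triv_path v)) = if atgt a == v then bas K (arrow_path a) else 0.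
Proof. by rewrite pmul_bas pcat_triv_r pend_arrow. Qed.

Lemma pmul_eA (K : fieldType) n (a : qarrow n) v :
  pmul (bas K (triv_path v)) (bas K (arrow_path a)) = if v == asrc a then bas K (arrow_path a) else 0.
Proof. by rewrite pmul_bas pcat_triv_l pstart_arrow. Qed.

Lemma mcoeff_lin (K : fieldType) n w (c : K) (u v : pathalg K n) :
  (c *: u + v)@_w = c * u@_w + v@_w.
Proof. by rewrite mcoeffD mcoeffZ. Qed.

Section Abstract.
Variables (K : fieldType) (n : nat) (V : lmodType K).
Variables (coef : qpath n -> V -> K) (B : qpath n -> V) (mul : V -> V -> V).
Variables (lam : K) (G X : V -> V) (gam : 'I_n -> K) (gv : 'I_n -> 'I_n).

Local Notation ev i := (B (triv_path i)).
Local Notation ar a := (B (arrow_path a)).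

Record Hyp : Prop := {
  cD : forall w (c : K) u v, coef w (c *: u + v) = c * coef w u + coef w v;
  cB : forall p w, coef w (B p) = (p == w)%:R;
  cext : forall u v, (forall w, coef w u = coef w v) -> u = v;
  mDZl : forall (c : K) u1 u2 v, mul (c *: u1 + u2) v = c *: mul u1 v + mul u2 v;
  mDZr : forall (c : K) u1 u2 v, mul v (c *: u1 + u2) = c *: mul v u1 + mul v u2;
  ceR : forall u v w, coef w (mul u (ev v)) = if pend w == v then coef w u else 0;
  ceL : forall u v w, coef w (mul (ev v) u) = if pstart w == v then coef w u else 0;
  mAe : forall a v, mul (ar a) (ev v) = if atgt a == v then ar a else 0;
  meA : forall a v, mul (ev v) (ar a) = if v == asrc a then ar a else 0;
  Glin : forall (c : K) u v, G (c *: u + v) = c *: G u + G v;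
  Xlin : forall (c : K) u v, X (c *: u + v) = c *: X u + X v;
  GX : forall u, G (X u) = lam *: X (G u);
  Xmul : forall u v, X (mul u v) = mul u (X v) + mul (X u) (G v);
  Ge : forall i, G (ev i) = ev (gv i);
  Xe : forall i, X (ev i) = gam i *: ev i - (gam i * lam^-1) *: ev (gv i);
  gg : forall i, gv (gv i) = i;
  l0 : lam != 0;
  l1 : lam != 1;
  Xlen : forall a w, (1 < plen w)%N -> coef w (X (ar a)) = 0 }.

Variable H : Hyp.

Lemma lin0 (f : V -> V) : (forall (c : K) u v, f (c *: u + v) = c *: f u + f v) -> f 0 = 0.
Proof.
move=> h; have := h 1 0 0; rewrite !scale1r addr0 => e.
by apply: (addrI (f 0)); rewrite addr0 -e.
Qed.

Lemma linZ (f : V -> V) :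
  (forall (c : K) u v, f (c *: u + v) = c *: f u + f v) -> forall c u, f (c *: u) = c *: f u.
Proof. by move=> h c u; have := h c u 0; rewrite !addr0 (lin0 h) addr0. Qed.

Lemma linD (f : V -> V) :
  (forall (c : K) u v, f (c *: u + v) = c *: f u + f v) -> forall u v, f (u + v) = f u + f v.
Proof. by move=> h u v; have := h 1 u v; rewrite !scale1r. Qed.

Lemma linN (f : V -> V) :
  (forall (c : K) u v, f (c *: u + v) = c *: f u + f v) -> forall u, f (- u) = - f u.
Proof. by move=> h u; rewrite -scaleN1r (linZ h) scaleN1r. Qed.

Lemma mR u v1 v2 (c1 c2 : K) : mul u (c1 *: v1 - c2 *: v2) = c1 *: mul u v1 - c2 *: mul u v2.
Proof.
have h := lin0 (fun c x y => mDZr H c x y u).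
by rewrite (mDZr H) -scaleNr -[_ *: v2]addr0 (mDZr H) h addr0 scaleNr.
Qed.
Lemma mL u v1 v2 (c1 c2 : K) : mul (c1 *: v1 - c2 *: v2) u = c1 *: mul v1 u - c2 *: mul v2 u.
Proof.
have h := lin0 (fun c x y => mDZl H c x y u).
by rewrite (mDZl H) -scaleNr -[_ *: v2]addr0 (mDZl H) h addr0 scaleNr.
Qed.
Lemma mZr u v (c : K) : mul u (c *: v) = c *: mul u v.
Proof. exact: (linZ (fun c x y => mDZr H c x y u)). Qed.

Lemma coefD w u v : coef w (u + v) = coef w u + coef w v.
Proof. by have := cD H w 1 u v; rewrite scale1r mul1r. Qed.
Lemma coef0 w : coef w 0 = 0.
Proof. by have := coefD w 0 0; rewrite addr0 => e; apply: (addrI (coef w 0)); rewrite addr0 -e. Qed.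
Lemma coefZ w c u : coef w (c *: u) = c * coef w u.
Proof. by have := cD H w c u 0; rewrite addr0 coef0 addr0. Qed.
Lemma coefN w u : coef w (- u) = - coef w u.
Proof. by rewrite -scaleN1r coefZ mulN1r. Qed.
Lemma coefB w u v : coef w (u - v) = coef w u - coef w v.
Proof. by rewrite coefD coefN. Qed.

Definition coefE := (coefD, coefB, coefZ, coefN, coef0, cB H).

Lemma GZ c u : G (c *: u) = c *: G u. Proof. exact: (linZ (Glin H)). Qed.
Lemma GD u v : G (u + v) = G u + G v. Proof. exact: (linD (Glin H)). Qed.
Lemma GN u : G (- u) = - G u. Proof. exact: (linN (Glin H)). Qed.
Lemma GB u v : G (u - v) = G u - G v. Proof. by rewrite GD GN. Qed.
Lemma XZ c u : X (c *: u) = c *: X u. Proof. exact: (linZ (Xlin H)). Qed.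
Lemma XD u v : X (u + v) = X u + X v. Proof. exact: (linD (Xlin H)). Qed.
Lemma XN u : X (- u) = - X u. Proof. exact: (linN (Xlin H)). Qed.
Lemma XB u v : X (u - v) = X u - X v. Proof. by rewrite XD XN. Qed.

Lemma triv_inj (i j : 'I_n) : (triv_path i == triv_path j) = (i == j).
Proof.
apply/eqP/eqP => [e|->] //.
by have := congr1 (@pstart n) e; rewrite !pstart_triv.
Qed.

Lemma gam_fix i : gv i = i -> gam i = 0.
Proof.
move=> ei; have := GX H (ev i).
rewrite (Ge H) ei (Xe H) ei GB !GZ (Ge H) ei.
move/(congr1 (coef (triv_path i))); rewrite !coefE eqxx.
have := l0 H; have := l1 H => h1 h0 /eqP h; rewrite -subr_eq0 in h.
have : gam i * (1 - lam^-1) * (1 - lam) = 0.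
  have t1 : (true%:R : K) = 1 by [].
  by rewrite -(eqP h) t1; field.
move/eqP; rewrite !mulf_eq0 !subr_eq0 => /orP[/orP[/eqP//|]|]; last by rewrite eq_sym (negbTE h1).
by rewrite eq_sym invr_eq1 (negbTE h1).
Qed.


Lemma nat1K : (true%:R : K) = 1. Proof. by []. Qed.
Lemma nat0K : (false%:R : K) = 0. Proof. by []. Qed.

Lemma gam_g i : gam (gv i) = lam^-1 * gam i.
Proof.
case: (eqVneq (gv i) i) => [ei|ne]; first by rewrite ei gam_fix // mulr0.
have := GX H (ev i).
rewrite (Ge H) (Xe H) (Xe H) GB !GZ !(Ge H) (gg H).
move/(congr1 (coef (triv_path (gv i)))); rewrite !coefE !triv_inj eqxx eq_sym (negbTE ne).
rewrite nat1K nat0K !mulr0 !subr0 !mulr1 => ->.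
by rewrite mulrA mulVf ?mul1r // (l0 H).
Qed.

Definition sig a := X (ar a) - gam (atgt a) *: ar a + (gam (asrc a) * lam^-1) *: G (ar a).

Lemma E1 a w : coef w (X (ar a)) =
  gam (atgt a) * coef w (ar a) + (if pend w == gv (atgt a) then coef w (X (ar a)) else 0).
Proof.
have e1 : mul (ar a) (ev (atgt a)) = ar a by rewrite (mAe H) eqxx.
have := Xmul H (ar a) (ev (atgt a)).
rewrite e1 (Xe H) mR (Ge H) !(mAe H) eqxx.
move/(congr1 (coef w)); rewrite coefD coefB !coefZ (ceR H) => E; rewrite {1}E.
case: (eqVneq (atgt a) (gv (atgt a))) => [et|ne].
  by rewrite -et (gam_fix (esym et)); ring.
by rewrite coef0; ring.
Qed.

Lemma E2 a a' mu : G (ar a) = mu *: ar a' -> asrc a' = gv (asrc a) -> forall w,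
  coef w (X (ar a)) =
  (if pstart w == asrc a then coef w (X (ar a)) else 0) - gam (asrc a) * lam^-1 * (mu * coef w (ar a')).
Proof.
move=> hGa hs w.
have e1 : mul (ev (asrc a)) (ar a) = ar a by rewrite (meA H) eqxx.
have := Xmul H (ev (asrc a)) (ar a).
rewrite e1 (Xe H) mL hGa !mZr !(meA H) -hs eqxx.
move/(congr1 (coef w)); rewrite coefD coefB !coefZ (ceL H) => E; rewrite {1}E.
case: (eqVneq (asrc a) (asrc a')) => [es|ne].
  have g0 : gam (asrc a) = 0 by apply: gam_fix; rewrite -hs es.
  by rewrite g0; ring.
by rewrite coef0; ring.
Qed.

Lemma support a a' mu : G (ar a) = mu *: ar a' -> asrc a' = gv (asrc a) ->
  atgt a' = gv (atgt a) -> forall w, coef w (sig a) != 0 ->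
  [/\ pstart w = asrc a, pend w = gv (atgt a) & (plen w <= 1)%N].
Proof.
move=> hGa hs ht w.
have cs : coef w (sig a) = coef w (X (ar a)) - gam (atgt a) * coef w (ar a)
   + gam (asrc a) * lam^-1 * (mu * coef w (ar a')).
  by rewrite /sig hGa coefD coefB !coefZ.
move=> nz.
case: (eqVneq (pstart w) (asrc a)) => [ps|ps]; last first.
  move: nz; rewrite cs (E2 hGa hs w) (negbTE ps) !(cB H).
  have -> : (arrow_path a == w) = false.
    by apply/negbTE; apply: contra ps => /eqP <-; rewrite pstart_arrow.
  by rewrite nat0K => /eqP nz'; exfalso; apply: nz'; ring.
case: (eqVneq (pend w) (gv (atgt a))) => [pe|pe]; last first.
  move: nz; rewrite cs (E1 a w) (negbTE pe) !(cB H).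
  have -> : (arrow_path a' == w) = false.
    by apply/negbTE; apply/negP => /eqP E; move: pe; rewrite -E pend_arrow ht eqxx.
  by rewrite nat0K => /eqP nz'; exfalso; apply: nz'; ring.
split => //; rewrite leqNgt; apply/negP => pl.
move: nz; rewrite cs (Xlen H a pl) !(cB H).
have -> : (arrow_path a' == w) = false.
  by apply/negbTE; apply/negP => /eqP e; move: pl; rewrite -e plen_arrow.
have -> : (arrow_path a == w) = false.
  by apply/negbTE; apply/negP => /eqP e; move: pl; rewrite -e plen_arrow.
by rewrite nat0K => /eqP nz'; exfalso; apply: nz'; ring.
Qed.

Lemma relation a a' mu : G (ar a) = mu *: ar a' -> asrc a' = gv (asrc a) ->
  atgt a' = gv (atgt a) -> mu *: sig a' = lam^-1 *: G (sig a).
Proof.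
move=> hGa hs ht.
have XG : X (G (ar a)) = lam^-1 *: G (X (ar a)).
  by rewrite (GX H) scalerA mulVf ?(l0 H) // scale1r.
have h1 : mu *: X (ar a') = lam^-1 *: G (X (ar a)) by rewrite -XZ -hGa XG.
have h3 : mu *: G (ar a') = G (G (ar a)) by rewrite -GZ -hGa.
apply: (cext H) => w.
move: (congr1 (coef w) h1) (congr1 (coef w) h3) (congr1 (coef w) hGa).
rewrite !coefZ => k1 k3 k2.
rewrite /sig ht hs !gam_g !(GD, GN, GZ) !(coefD, coefN, coefZ).
set x1 := coef w (X (ar a')); set x2 := coef w (ar a'); set x3 := coef w (G (ar a')).
transitivity (mu * x1 - lam^-1 * gam (atgt a) * (mu * x2) + lam^-1 * gam (asrc a) * lam^-1 * (mu * x3)).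
  by ring.
rewrite k1 k3 -k2; ring.
Qed.

Lemma shape u w0 : (forall w, coef w u != 0 -> w = w0) -> u = coef w0 u *: B w0.
Proof.
move=> h; apply: (cext H) => w; rewrite coefZ (cB H).
case: (eqVneq w0 w) => [<-|ne]; first by rewrite nat1K mulr1.
rewrite nat0K mulr0; apply/eqP; apply: contraT => nz.
by move: ne; rewrite (h w nz) eqxx.
Qed.

Lemma shape0 u : (forall w, coef w u = 0) -> u = 0.
Proof. by move=> h; apply: (cext H) => w; rewrite h coef0. Qed.

Lemma rel_arr a a' mu b b' mub c : G (ar a) = mu *: ar a' -> asrc a' = gv (asrc a) ->
  atgt a' = gv (atgt a) -> sig a = c *: ar b -> G (ar b) = mub *: ar b' ->
  mu * coef (arrow_path b') (sig a') = lam^-1 * (c * mub).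
Proof.
move=> hGa hs ht hb hGb; have := relation hGa hs ht.
rewrite hb GZ hGb => /(congr1 (coef (arrow_path b'))).
by rewrite !coefZ (cB H) eqxx nat1K mulr1.
Qed.

Lemma rel_vtx a a' mu v c : G (ar a) = mu *: ar a' -> asrc a' = gv (asrc a) ->
  atgt a' = gv (atgt a) -> sig a = c *: ev v ->
  mu * coef (triv_path (gv v)) (sig a') = lam^-1 * c.
Proof.
move=> hGa hs ht hb; have := relation hGa hs ht.
rewrite hb GZ (Ge H) => /(congr1 (coef (triv_path (gv v)))).
by rewrite !coefZ (cB H) eqxx nat1K mulr1.
Qed.

End Abstract.

Lemma mod2n (n x : nat) : (0 < x)%N -> (x < 2 * n)%N ->
  ((2 * n - x) %% n = if (x <= n)%N then n - x else 2 * n - x)%N.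
Proof.
move=> x0 x2; case: leqP => hx.
  have -> : (2 * n - x = (n - x) + n)%N by lia.
  by rewrite modnDr modn_small //; lia.
by rewrite modn_small //; lia.
Qed.

Lemma ordS_spec n (i : 'I_n) :
  (i.+1 = n /\ (ordS i : nat) = 0%N) \/ (i.+1 < n /\ (ordS i : nat) = i.+1)%N.
Proof.
have := ltn_ord i; rewrite /=; case: (eqVneq i.+1 n) => [e|ne] lt.
  by left; rewrite e modnn.
by right; rewrite modn_small //; lia.
Qed.

Lemma n_pos n (i : 'I_n) : (0 < n)%N.
Proof. by have := ltn_ord i; lia. Qed.

Definition gvf (n d : nat) (i : 'I_n) : 'I_n := Ordinal (ltn_pmod (refl_vtx n d i) (n_pos i)).

Lemma gvf_spec n d (i : 'I_n) : (0 < d)%N -> (d <= n.-1)%N ->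
  (d + i <= n /\ (gvf d i : nat) = n - (d + i))%N \/ (n < d + i /\ (gvf d i : nat) = 2 * n - (d + i))%N.
Proof.
move=> d0 dn; rewrite /= modn_mod /refl_vtx mod2n; last 2 first.
- lia.
- have := ltn_ord i; lia.
case: leqP => h; [by left | by right].
Qed.

Lemma gv_inv n d (i : 'I_n) : (0 < d)%N -> (d <= n.-1)%N -> gvf d (gvf d i) = i.
Proof.
move=> d0 dn; apply: ord_inj.
have := ltn_ord i; have := ltn_ord (gvf d i).
case: (gvf_spec i d0 dn) => [[? ?]|[? ?]]; case: (gvf_spec (gvf d i) d0 dn) => [[? ?]|[? ?]]; lia.
Qed.

Lemma gv_S n d (i : 'I_n) : (0 < d)%N -> (d <= n.-1)%N -> ordS (gvf d (ordS i)) = gvf d i.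
Proof.
move=> d0 dn; apply: ord_inj.
have := ltn_ord i; have := ltn_ord (gvf d i); have := ltn_ord (gvf d (ordS i)).
case: (ordS_spec i) => [[? ?]|[? ?]]; case: (ordS_spec (gvf d (ordS i))) => [[? ?]|[? ?]];
case: (gvf_spec i d0 dn) => [[? ?]|[? ?]]; case: (gvf_spec (ordS i) d0 dn) => [[? ?]|[? ?]]; lia.
Qed.

Lemma gvS_val n d (i : 'I_n) : (0 < d)%N -> (d <= n.-1)%N ->
  (gvf d (ordS i) : nat) = ((2 * n - (d + i + 1)) %% n)%N.
Proof.
move=> d0 dn; rewrite mod2n; last 2 first.
- lia.
- have := ltn_ord i; lia.
have := ltn_ord i.
case: (ordS_spec i) => [[? ?]|[? ?]]; case: (gvf_spec (ordS i) d0 dn) => [[? ?]|[? ?]]; case: (leqP (d + i + 1) n) => ?; lia.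
Qed.

Lemma S_neq n (x : 'I_n) : (1 < n)%N -> ordS x != x.
Proof.
move=> n1; apply/eqP => /(congr1 (@nat_of_ord n)); have := ltn_ord x.
case: (ordS_spec x) => [[? ?]|[? ?]]; lia.
Qed.

Lemma SS_neq n (x : 'I_n) : (2 < n)%N -> ordS (ordS x) != x.
Proof.
move=> n2; apply/eqP => /(congr1 (@nat_of_ord n)); have := ltn_ord x.
case: (ordS_spec x) => [[? ?]|[? ?]]; case: (ordS_spec (ordS x)) => [[? ?]|[? ?]]; lia.
Qed.

Lemma classify n (w : qpath n) s t : (plen w <= 1)%N -> pstart w = s -> pend w = t ->
  [\/ w = triv_path s /\ s = t, w = arrow_path (s, false) /\ t = ordS s
    | w = arrow_path (t, true) /\ s = ordS t].
Proof.
case: w => [[v q] hv]; rewrite /plen /pstart /pend /=.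
case: q hv => [|b [|? ?]] //= hv _ <- <-.
  by apply: Or31; split => //; apply: val_inj.
have /andP[/eqP hb _] := hv.
case: b hv hb => x [] /= hv hb.
  apply: Or33; split => //; apply: val_inj => /=; by rewrite -hb.
apply: Or32; split => //; apply: val_inj => /=; by rewrite -hb.
Qed.

Lemma neg_pair (K : fieldType) (l x y : K) : l != 1 -> x = l * y -> y = l * x -> x = - y.
Proof.
move=> l1 hx hy.
have h2 : l * (l * x) = x by rewrite -hy -hx.
have e : x * ((1 - l) * (1 + l)) = x - l * (l * x) by ring.
rewrite h2 subrr in e; move/eqP: e => e.
move: e; rewrite !mulf_eq0 subr_eq0 [1 == l]eq_sym (negbTE l1) /= => /orP[/eqP x0|].
  by rewrite hy x0 mulr0 oppr0.
by rewrite addrC addr_eq0 => /eqP hl; rewrite hx hl mulN1r.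
Qed.

Lemma cancel_l (K : fieldType) (m x l y : K) : m != 0 -> m * x = l * (y * m) -> x = l * y.
Proof. by move=> nz h; apply: (mulfI nz); rewrite h; ring. Qed.

Unset Implicit Arguments.

Theorem lemma3p11 (K : fieldType) (r m : nat) (lam : K) (n d : nat)
  (G X : pathalg K n -> pathalg K n) (mu mus gam : 'I_n -> K) :
  (1 < r)%N -> (0 < m)%N -> (r %| m)%N -> r.-primitive_root lam -> (r%:R : K) != 0 ->
  (3 <= n)%N ->
  (* T acts linearly and inner faithfully on k Qbar *)
  taft_module_algebra r m lam G X ->
  taft_linear_action G X ->
  inner_faithful r m lam G X ->
  (* g acts by a reflection *)
  (0 < d)%N -> (d <= n.-1)%N ->
  (forall i, mu i != 0) -> (forall i, mus i != 0) ->
  (forall i j : 'I_n, (j : nat) = refl_vtx n d i ->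
     G (evtx K i) = evtx K j) ->
  (forall i j : 'I_n, (j : nat) = (((2 * n) - (d + i + 1)) %% n)%N ->
     G (earr K (i, false)) = mu i *: earr K (j, true) /\
     G (earr K (i, true)) = mus i *: earr K (j, false)) ->
  (* the scalars gamma_i : x . e_i = gamma_i e_i - gamma_i lam^-1 e_{g.i} *)
  (forall i j : 'I_n, (j : nat) = refl_vtx n d i ->
     X (evtx K i) = gam i *: evtx K i - (gam i * lam^-1) *: evtx K j) ->
  let sigma := quiver_taft lam gam G X in
  [/\ (* (1) *)
      (forall j : 'I_n, refl_vtx n d j = j ->
         exists c cs : K,
           [/\ sigma (ord_pred j, false) = - cs *: earr K (ord_pred j, false),
               sigma (ord_pred j, true)
                 = - ((mu j)^-1 * mus (ord_pred j) * c) *: earr K (j, false),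
               sigma (j, false) = c *: earr K (ord_pred j, true)
             & sigma (j, true) = cs *: earr K (j, true)]),
      (* (2) *)
      (forall k : 'I_n, refl_vtx n d k = ordS k -> refl_vtx n d (ordS k) = k ->
         exists c : K,
           [/\ sigma (k, false) = c *: evtx K k,
               sigma (k, true) = (lam * mus k * c) *: evtx K (ordS k)
             & c != 0 -> lam ^+ 2 * mu k * mus k = 1])
    & (* (3) *)
      (forall i : 'I_n,
         (forall j : 'I_n, refl_vtx n d j = j -> i <> ord_pred j /\ i <> j) ->
         ~ (refl_vtx n d i = ordS i /\ refl_vtx n d (ordS i) = i) ->
         sigma (i, false) = 0 /\ sigma (i, true) = 0)].
Proof.
move=> hr hm hrm prim hrK hn HT HL HI hd0 hdn hmu hmus HGe HGa HXe sigma.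
pose gv := @gvf n d.
have n1 : (1 < n)%N by lia.
have n2 : (2 < n)%N by lia.
have gv_val i : (gv i : nat) = refl_vtx n d i by rewrite /= modn_mod.
have gg i : gv (gv i) = i by exact: gv_inv.
have gvS i : ordS (gv (ordS i)) = gv i by exact: gv_S.
have Ge i : G (evtx K i) = evtx K (gv i) := HGe i (gv i) (gv_val i).
have Xe i : X (evtx K i) = gam i *: evtx K i - (gam i * lam^-1) *: evtx K (gv i)
  := HXe i (gv i) (gv_val i).
have GF i i' : i' = gv (ordS i) -> G (earr K (i, false)) = mu i *: earr K (i', true).
  move=> e; have h : (i' : nat) = ((2 * n - (d + i + 1)) %% n)%N by rewrite e gvS_val.
  by case: (HGa i i' h).
have GT i i' : i' = gv (ordS i) -> G (earr K (i, true)) = mus i *: earr K (i', false).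
  move=> e; have h : (i' : nat) = ((2 * n - (d + i + 1)) %% n)%N by rewrite e gvS_val.
  by case: (HGa i i' h).
case: HT => Glin Xlin GX _ [_ [Gmul _] Xmul _].
case: HL => _ _ _ HX.
have l0 : lam != 0.
  apply/negP => /eqP l0; move: (prim_expr_order prim); rewrite l0 expr0n.
  have -> : (r == 0%N) = false by apply/negbTE; lia.
  by move/eqP; rewrite eq_sym oner_eq0.
have l1 : lam != 1.
  apply/negP => /eqP l1; move: (prim_order_dvd prim 1); rewrite l1 expr1 eqxx dvdn1.
  by move/eqP; lia.
have HH : Hyp (fun w (u : pathalg K n) => u@_w) (@bas K n) (@pmul K n) lam G X gam gv.
  constructor.
  - exact: mcoeff_lin.
  - exact: basE.
  - by move=> u v h; apply/malgP.
  - exact: pmulDZl.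
  - exact: pmulDZr.
  - exact: coef_mul_e_r.
  - exact: coef_mul_e_l.
  - exact: pmul_Ae.
  - exact: pmul_eA.
  - exact: Glin.
  - exact: Xlin.
  - exact: GX.
  - exact: Xmul.
  - exact: Ge.
  - exact: Xe.
  - exact: gg.
  - exact: l0.
  - exact: l1.
  - (move=> a w hw; apply: mcoeff_outdom; apply/negP => /(HX a); lia).
pose S a := quiver_taft lam gam G X a.
have nS x : ordS x != x := S_neq x n1.
have nSS x : ordS (ordS x) != x := SS_neq x n2.
have hsF i i' : i' = gv (ordS i) -> asrc (i', true) = gv (asrc (i, false)).
  by move=> ->; exact: gvS.
have htF i i' : i' = gv (ordS i) -> atgt (i', true) = gv (atgt (i, false)).
  by move=> ->.
have hsT i i' : i' = gv (ordS i) -> asrc (i', false) = gv (asrc (i, true)).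
  by move=> ->.
have htT i i' : i' = gv (ordS i) -> atgt (i', false) = gv (atgt (i, true)).
  by move=> ->; exact: gvS.
have supF i i' (e : i' = gv (ordS i)) w : (S (i, false))@_w != 0 ->
    [/\ pstart w = i, pend w = gv (ordS i) & (plen w <= 1)%N].
  exact: (support HH (GF i i' e) (hsF i i' e) (htF i i' e)).
have supT i i' (e : i' = gv (ordS i)) w : (S (i, true))@_w != 0 ->
    [/\ pstart w = ordS i, pend w = gv i & (plen w <= 1)%N].
  exact: (support HH (GT i i' e) (hsT i i' e) (htT i i' e)).
have hl : lam^-1 != 1 by rewrite invr_eq1.
split.
- move=> j hj.
  have gj : gv j = j by apply: ord_inj; rewrite gv_val hj.
  have [p Sp] : exists p, ordS p = j by exists (ord_pred j); exact: ord_predK.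
  have -> : ord_pred j = p by rewrite -Sp ordSK.
  have gSp : j = gv (ordS p) by rewrite Sp gj.
  have gSj : p = gv (ordS j) by apply: (@ordS_inj n); rewrite gvS gj Sp.
  have gp : gv p = ordS j by rewrite -gvS -gSp.
  have pj : p != j by apply/eqP => e; move: (nS j); rewrite -{1}e Sp eqxx.
  pose c1 := (S (p, false))@_(arrow_path (p, false)).
  pose c2 := (S (p, true))@_(arrow_path (j, false)).
  pose c3 := (S (j, false))@_(arrow_path (p, true)).
  pose c4 := (S (j, true))@_(arrow_path (j, true)).
  have s1 : S (p, false) = c1 *: bas K (arrow_path (p, false)).
    apply: (shape HH) => w nz; have [ps pe pl] := supF p j gSp w nz.
    rewrite -gSp in pe.
    case: (classify pl ps pe) => [[_ e]|[-> _]|[_ e]] //.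
      by move: pj; rewrite e eqxx.
    by move: (nSS j); rewrite -e Sp eqxx.
  have s4 : S (j, true) = c4 *: bas K (arrow_path (j, true)).
    apply: (shape HH) => w nz; have [ps pe pl] := supT j p gSj w nz.
    rewrite gj in pe.
    case: (classify pl ps pe) => [[_ e]|[_ e]|[-> _]] //.
      by move: (nS j); rewrite e eqxx.
    by move: (nSS j); rewrite -e eqxx.
  have s3 : S (j, false) = c3 *: bas K (arrow_path (p, true)).
    apply: (shape HH) => w nz; have [ps pe pl] := supF j p gSj w nz.
    rewrite -gSj in pe.
    case: (classify pl ps pe) => [[_ e]|[_ e]|[-> _]] //.
      by move: pj; rewrite e eqxx.
    by move: (nSS j); rewrite -e Sp eqxx.
  have s2 : S (p, true) = c2 *: bas K (arrow_path (j, false)).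
    apply: (shape HH) => w nz; have [ps pe pl] := supT p j gSp w nz.
    rewrite Sp in ps; rewrite gp in pe.
    case: (classify pl ps pe) => [[_ e]|[-> _]|[_ e]] //.
      by move: (nS j); rewrite -e eqxx.
    by move: (nSS j); rewrite -e eqxx.
  have r1 : mu p * c4 = lam^-1 * (c1 * mu p)
    := rel_arr HH (GF p j gSp) (hsF p j gSp) (htF p j gSp) s1 (GF p j gSp).
  have r2 : mus j * c1 = lam^-1 * (c4 * mus j)
    := rel_arr HH (GT j p gSj) (hsT j p gSj) (htT j p gSj) s4 (GT j p gSj).
  have r3 : mu j * c2 = lam^-1 * (c3 * mus p)
    := rel_arr HH (GF j p gSj) (hsF j p gSj) (htF j p gSj) s3 (GT p j gSp).
  have r4 : mus p * c3 = lam^-1 * (c2 * mu j)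
    := rel_arr HH (GT p j gSp) (hsT p j gSp) (htT p j gSp) s2 (GF j p gSj).
  have e14 : c1 = - c4 := neg_pair hl (cancel_l (hmus j) r2) (cancel_l (hmu p) r1).
  have e23 : mu j * c2 = - (mus p * c3).
    by apply: (neg_pair hl); [rewrite r3 [c3 * _]mulrC | rewrite r4 [c2 * _]mulrC].
  have e23' : c2 = - ((mu j)^-1 * mus p * c3).
    by apply: (mulfI (hmu j)); rewrite e23 mulrN !mulrA mulfV ?hmu // mul1r.
  exists c3, c4; split.
  + transitivity (c1 *: earr K (p, false)); first exact: s1.
    exact: (congr1 (fun c => c *: earr K (p, false)) e14).
  + transitivity (c2 *: earr K (j, false)); first exact: s2.
    exact: (congr1 (fun c => c *: earr K (j, false)) e23').
  + exact: s3.
  + exact: s4.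
- move=> k hk1 hk2.
  have gk : gv k = ordS k by apply: ord_inj; rewrite gv_val hk1.
  have gSk : gv (ordS k) = k by apply: ord_inj; rewrite gv_val hk2.
  have eF : k = gv (ordS k) by rewrite gSk.
  pose c := (S (k, false))@_(triv_path k).
  pose c' := (S (k, true))@_(triv_path (ordS k)).
  have sF : S (k, false) = c *: bas K (triv_path k).
    apply: (shape HH) => w nz; have [ps pe pl] := supF k k eF w nz.
    rewrite gSk in pe.
    case: (classify pl ps pe) => [[-> _]|[_ e]|[_ e]] //.
      by move: (nS k); rewrite -e eqxx.
    by move: (nS k); rewrite -e eqxx.
  have sT : S (k, true) = c' *: bas K (triv_path (ordS k)).
    apply: (shape HH) => w nz; have [ps pe pl] := supT k k eF w nz.
    rewrite gk in pe.
    case: (classify pl ps pe) => [[-> _]|[_ e]|[_ e]] //.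
      by move: (nS (ordS k)); rewrite -e eqxx.
    by move: (nS (ordS k)); rewrite -e eqxx.
  have r1 := rel_vtx HH (GF k k eF) (hsF k k eF) (htF k k eF) sF.
  rewrite gk -/c' in r1.
  have r2 := rel_vtx HH (GT k k eF) (hsT k k eF) (htT k k eF) sT.
  rewrite gSk -/c in r2.
  have ec' : c' = lam * mus k * c by rewrite -mulrA r2 mulrA (mulfV l0) mul1r.
  exists c; split.
  + exact: sF.
  + transitivity (c' *: evtx K (ordS k)); first exact: sT.
    exact: (congr1 (fun x => x *: evtx K (ordS k)) ec').
  + move=> cnz; rewrite ec' in r1.
    have h : (lam ^+ 2 * mu k * mus k - 1) * c = lam * (mu k * (lam * mus k * c) - lam^-1 * c).
      by field.
    rewrite r1 subrr mulr0 in h; move/eqP: h; rewrite mulf_eq0 (negbTE cnz) orbF subr_eq0.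
    by move/eqP.
- move=> i Hj Hk.
  have eS : gv (ordS i) = gv (ordS i) by [].
  split.
  + apply: (shape0 HH) => w; apply/eqP; apply: contraT => nz.
    have [ps pe pl] := supF i (gv (ordS i)) eS w nz.
    case: (classify pl ps pe) => [[_ e]|[_ e]|[_ e]].
    * have g1 : gv i = ordS i by rewrite {1}e gg.
      have g2 : gv (ordS i) = i by rewrite -e.
      by exfalso; apply: Hk; rewrite -!gv_val g1 g2.
    * have h : refl_vtx n d (ordS i) = ordS i by rewrite -gv_val e.
      by case: (Hj (ordS i) h) => h1 _; exfalso; apply: h1; rewrite ordSK.
    * have gi : gv i = i by rewrite {2}e gvS.
      have h : refl_vtx n d i = i by rewrite -gv_val gi.
      by case: (Hj i h) => _ h1; exfalso; apply: h1.
  + apply: (shape0 HH) => w; apply/eqP; apply: contraT => nz.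
    have [ps pe pl] := supT i (gv (ordS i)) eS w nz.
    case: (classify pl ps pe) => [[_ e]|[_ e]|[_ e]].
    * have g2 : gv (ordS i) = i by rewrite e gg.
      by exfalso; apply: Hk; rewrite -!gv_val -e g2.
    * have g : gv (ordS i) = ordS i by apply: (@ordS_inj n); rewrite gvS e.
      have h : refl_vtx n d (ordS i) = ordS i by rewrite -gv_val g.
      by case: (Hj (ordS i) h) => h1 _; exfalso; apply: h1; rewrite ordSK.
    * have gi : gv i = i by apply: (@ordS_inj n); rewrite -e.
      have h : refl_vtx n d i = i by rewrite -gv_val gi.
      by case: (Hj i h) => _ h1; exfalso; apply: h1.
Qed.
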